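(* Let $n\geq 5$ and let $f$ be a permutation of $V(\overline{C_n})$ that is not an automorphism of $\overline{C_n}$. Then $\delta_f(\overline{C_n})\geq 4$.
   Context: $C_n$ is the cycle on vertices $v_1,\dots,v_n$ (with $v_i$ adjacent to $v_{i+1}$, indices mod $n$), and $\overline{C_n}$ is its complement: two distinct vertices are adjacent in $\overline{C_n}$ iff they are not adjacent in $C_n$. $d(x,y)$ denotes the distance in $\overline{C_n}$. For a permutation $f$ of the vertex set and distinct vertices $x,y$, $\delta_f(x,y)=|d(x,y)-d(f(x),f(y))|$, and $\delta_f(\overline{C_n})=\sum\delta_f(x,y)$ over all unordered pairs $\{x,y\}$ of distinct vertices. *)

(* Defs.v *)
From mathcomp Require Import all_boot all_fingroup.
Set Implicit Arguments. Unset Strict Implicit. Unset Printing Implicit Defensive.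

(* Vertices v_1..v_n are represented by 'I_n (v_{i+1} ~ i). *)

Definition cycle_adj (n : nat) (x y : 'I_n) : bool :=
  ((x.+1 %% n)%N == y) || ((y.+1 %% n)%N == x).

Definition ccycle_adj (n : nat) (x y : 'I_n) : bool :=
  (x != y) && ~~ cycle_adj x y.

Fixpoint cwalk (n : nat) (k : nat) (x y : 'I_n) : bool :=
  match k with
  | 0 => x == y
  | k'.+1 => [exists z, ccycle_adj x z && cwalk k' z y]
  end.

(* Graph distance in the complement of C_n: the least k < n such that a walk
   of length k joins x and y (a shortest walk is a path, so has length <= n-1).
   If no such k exists (disconnected case) the value is n; this never happens
   for n >= 5 since the complement of C_n is connected. *)
Definition cdist (n : nat) (x y : 'I_n) : nat :=
  find (fun k => cwalk k x y) (iota 0 n).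

Definition absdiff (a b : nat) : nat := (a - b) + (b - a).

Definition delta_pair (n : nat) (f : {perm 'I_n}) (x y : 'I_n) : nat :=
  absdiff (cdist x y) (cdist (f x) (f y)).

Definition delta (n : nat) (f : {perm 'I_n}) : nat :=
  \sum_(x : 'I_n) \sum_(y : 'I_n | (x < y)%N) delta_pair f x y.

Definition is_caut (n : nat) (f : {perm 'I_n}) : Prop :=
  forall x y : 'I_n, ccycle_adj (f x) (f y) = ccycle_adj x y.

(* Main.v *)
Require Import Defs.
From mathcomp Require Import all_boot all_fingroup zify.

Lemma modn2 a n : a < n + n -> a %% n = if a < n then a else a - n.
Proof.
move=> h; case: ifP => h2; first by rewrite modn_small.
have -> : a = (a - n) + n by lia.
by rewrite modnDr modn_small; lia.
Qed.

Lemma modSm a n : (a %% n).+1 %% n = a.+1 %% n.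
Proof. by rewrite -addn1 modnDml addn1. Qed.

Ltac modsolve := rewrite ?modSm; rewrite ?modn2; try lia; repeat (case: ifP => ?); lia.

Lemma cycle_adjC n (x y : 'I_n) : cycle_adj x y = cycle_adj y x.
Proof. by rewrite /cycle_adj orbC. Qed.

Lemma ccycle_adjC n (x y : 'I_n) : ccycle_adj x y = ccycle_adj y x.
Proof. by rewrite /ccycle_adj cycle_adjC eq_sym. Qed.

Lemma cycle_adj_irr n (x : 'I_n) : 2 < n -> cycle_adj x x = false.
Proof. move=> hn; have hx := ltn_ord x. rewrite /cycle_adj orbb; apply/eqP; modsolve. Qed.

Lemma L2 n (x y : 'I_n) : 5 <= n -> x.+1 %% n = y ->
  exists z, ccycle_adj x z && ccycle_adj z y.
Proof.
move=> hn hy; have hx := ltn_ord x; have hy' := ltn_ord y.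
have np : 0 < n by lia.
exists (Ordinal (ltn_pmod (x+3) np)).
rewrite /ccycle_adj /cycle_adj -!val_eqE /= -hy.
modsolve.
Qed.

Lemma cw1 n (x y : 'I_n) : [exists z, ccycle_adj x z && (z == y)] = ccycle_adj x y.
Proof.
apply/existsP/idP => [[z /andP[h /eqP <-]] //|h]; by exists y; rewrite h eqxx.
Qed.

Lemma cw2 n (x y : 'I_n) : 5 <= n -> cycle_adj x y ->
  [exists z, ccycle_adj x z && [exists z0, ccycle_adj z z0 && (z0 == y)]].
Proof.
move=> hn /orP[] /eqP h.
- have [z /andP[h1 h2]] := L2 _ _ _ hn h.
  by apply/existsP; exists z; rewrite h1 cw1.
- have [z /andP[h1 h2]] := L2 _ _ _ hn h.
  by apply/existsP; exists z; rewrite ccycle_adjC h2 cw1 ccycle_adjC.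
Qed.

Lemma cdistE n (x y : 'I_n) : 5 <= n ->
  cdist x y = if x == y then 0 else if cycle_adj x y then 2 else 1.
Proof.
move=> hn; rewrite /cdist.
have -> : iota 0 n = [:: 0, 1, 2 & iota 3 (n-3)].
  by case: n x y hn => [|[|[|m]]] //= x y _; rewrite !subSS subn0.
rewrite /=; case: eqP => // ne.
rewrite cw1 /ccycle_adj.
have -> : (x != y) by apply/eqP.
case h: (cycle_adj x y) => //=.
by rewrite (cw2 _ _ _ hn h).
Qed.

Section Main.
Variables (n : nat) (f : {perm 'I_n}).
Hypothesis hn : 5 <= n.

Definition PA (x y : 'I_n) := cycle_adj x y && ~~ cycle_adj (f x) (f y).
Definition QB (x y : 'I_n) := ~~ cycle_adj x y && cycle_adj (f x) (f y).

Lemma dpE x y : delta_pair f x y = (PA x y || QB x y).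
Proof.
rewrite /delta_pair !cdistE // (inj_eq perm_inj) /PA /QB.
case: eqP => [->|ne].
  rewrite !cycle_adj_irr //; lia.
by case: (cycle_adj x y); case: (cycle_adj (f x) (f y)).
Qed.

Lemma degE (v : 'I_n) : #|[set y | cycle_adj v y]| = 2.
Proof.
have hv := ltn_ord v.
have -> : [set y | cycle_adj v y] = [set ordS v; ord_pred v].
  apply/setP => y; have hy := ltn_ord y; rewrite !inE /cycle_adj -!val_eqE /=.
  apply/idP/idP; modsolve.
rewrite cards2; suff -> : ordS v != ord_pred v by [].
rewrite -val_eqE /=; modsolve.
Qed.

Lemma balanced v : #|[set y | PA v y]| = #|[set y | QB v y]|.
Proof.
have e1 := cardsID [set y | cycle_adj (f v) (f y)] [set y | cycle_adj v y].
have e2 := cardsID [set y | cycle_adj v y] [set y | cycle_adj (f v) (f y)].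
have E : [set y | cycle_adj (f v) (f y)] = f @^-1: [set y | cycle_adj (f v) y].
  by apply/setP => y; rewrite !inE.
rewrite E in e2.
rewrite card_preimset in e2; last exact: perm_inj.
rewrite !degE in e1 e2.
have -> : [set y | PA v y] = [set y | cycle_adj v y] :\: [set y | cycle_adj (f v) (f y)].
  by apply/setP => y; rewrite !inE /PA andbC.
have -> : [set y | QB v y] = (f @^-1: [set y | cycle_adj (f v) y]) :\: [set y | cycle_adj v y].
  by apply/setP => y; rewrite !inE /QB andbC.
have E2 : (f @^-1: [set y | cycle_adj (f v) y]) :&: [set y | cycle_adj v y] =
  [set y | cycle_adj v y] :&: [set y | cycle_adj (f v) (f y)].
  by apply/setP => y; rewrite !inE andbC.
rewrite E2 in e2.
by apply/eqP; rewrite -(eqn_add2l #|[set y | cycle_adj v y] :&: [set y | cycle_adj (f v) (f y)]|) e1 e2.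
Qed.

Lemma balP v : (exists y, PA v y) <-> (exists y, QB v y).
Proof.
have := balanced v; split => [[y hy]|[y hy]].
- have : 0 < #|[set y | QB v y]| by rewrite -H; apply/card_gt0P; exists y; rewrite inE.
  by case/card_gt0P => z; rewrite inE; exists z.
- have : 0 < #|[set y | PA v y]| by rewrite H; apply/card_gt0P; exists y; rewrite inE.
  by case/card_gt0P => z; rewrite inE; exists z.
Qed.

End Main.

Lemma dbl n (g : 'I_n -> 'I_n -> nat) : (forall x y, g x y = g y x) -> (forall x, g x x = 0) ->
 \sum_(x : 'I_n) \sum_(y : 'I_n) g x y = 2 * \sum_(x : 'I_n) \sum_(y : 'I_n | x < y) g x y.
Proof.
move=> gs g0.
have E : forall x : 'I_n, \sum_(y : 'I_n) g x y = \sum_(y : 'I_n | x < y) g x y + \sum_(y : 'I_n | y < x) g x y.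
  move=> x; rewrite (bigID (fun y : 'I_n => x < y) xpredT) /=; congr (_ + _).
  rewrite big_mkcond [RHS]big_mkcond; apply: eq_bigr => y _ /=.
  by case: (ltngtP x y) => [h|h|/val_inj ->]; rewrite ?g0.
rewrite (eq_bigr _ (fun x _ => E x)) big_split /=.
rewrite (exchange_big_dep xpredT) //= mul2n -addnn; congr (_ + _).
by apply: eq_bigr => y _; apply: eq_bigr => x _.
Qed.

Lemma four (T : finType) (P Q : rel T) :
 (forall u v, P u v = P v u) -> (forall u v, Q u v = Q v u) ->
 (forall u v, P u v -> ~~ Q u v) -> (forall u, ~~ P u u) -> (forall u, ~~ Q u u) ->
 (forall v, (exists y, P v y) <-> (exists y, Q v y)) -> forall a b, P a b ->
 exists a1 a2 a3 a4, uniq [:: a1; a2; a3; a4] /\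
   forall v, v \in [:: a1; a2; a3; a4] -> (exists y, P v y) /\ (exists y, Q v y).
Proof.
move=> PC QC PQ Pi Qi bal a b hab.
have both1 v y : P v y -> (exists y, P v y) /\ (exists y, Q v y).
  by move=> h; split; [exists y | apply/bal; exists y].
have both2 v y : Q v y -> (exists y, P v y) /\ (exists y, Q v y).
  by move=> h; split; [apply/bal; exists y | exists y].
have [z hz] : exists z, Q a z by apply/bal; exists b.
have [w hw] : exists w, Q b w by apply/bal; exists a; rewrite PC.
have [u hu] : exists u, P z u by apply/bal; exists a; rewrite QC.
have ab : a != b by apply/eqP => e; move: hab; rewrite e; apply/negP.
have az : a != z by apply/eqP => e; move: hz; rewrite e; apply/negP.
have bz : b != z by apply/eqP => e; move: (PQ _ _ hab); rewrite e hz.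
have bw : b != w by apply/eqP => e; move: hw; rewrite -e; apply/negP.
have aw : a != w by apply/eqP => e; move: (PQ _ _ hab); rewrite e QC hw.
have zu : z != u by apply/eqP => e; move: hu; rewrite -e; apply/negP.
have au : a != u by apply/eqP => e; move: (PQ _ _ hu); rewrite -e QC hz.
case: (eqVneq u b) => [ub|ub].
- have zw : z != w.
    by apply/eqP => e; move: hu; rewrite ub PC => /PQ; rewrite e hw.
  exists a, b, z, w; split.
    by rewrite /= !inE !negb_or ab az aw bz bw zw.
  move=> v; rewrite !inE => /or4P[] /eqP ->.
  + exact: (both1 _ _ hab).
  + by apply: (both1 _ a); rewrite PC.
  + exact: (both2 _ _ (etrans (QC _ _) hz)).
  + exact: (both2 _ _ (etrans (QC _ _) hw)).
- exists a, b, z, u; split.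
    by rewrite /= !inE !negb_or ab az au bz eq_sym ub zu.
  move=> v; rewrite !inE => /or4P[] /eqP ->.
  + exact: (both1 _ _ hab).
  + by apply: (both1 _ a); rewrite PC.
  + exact: (both2 _ _ (etrans (QC _ _) hz)).
  + exact: (both1 _ _ (etrans (PC _ _) hu)).
Qed.

Theorem lemma2p3 (n : nat) (f : {perm 'I_n}) :
  (5 <= n)%N -> ~ is_caut f -> (4 <= delta f)%N.
Proof.
move=> hn nc.
case: (boolP [exists a, exists b, PA n f a b || QB n f a b]) => [/existsP[a /existsP[b hab]] | H]; last first.
  exfalso; apply: nc => x y.
  move: H; rewrite negb_exists => /forallP /(_ x); rewrite negb_exists => /forallP /(_ y).
  rewrite /ccycle_adj /PA /QB (inj_eq perm_inj).
  by case: (cycle_adj x y); case: (cycle_adj (f x) (f y)); case: (x == y).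
have key : exists a1 a2 a3 a4, uniq [:: a1; a2; a3; a4] /\
   forall v, v \in [:: a1; a2; a3; a4] -> (exists y, PA n f v y) /\ (exists y, QB n f v y).
  have PC u v : PA n f u v = PA n f v u by rewrite /PA cycle_adjC (cycle_adjC _ (f u)).
  have QC u v : QB n f u v = QB n f v u by rewrite /QB cycle_adjC (cycle_adjC _ (f u)).
  have PQ u v : PA n f u v -> ~~ QB n f u v by rewrite /PA /QB => /andP[-> _].
  have QP u v : QB n f u v -> ~~ PA n f u v by rewrite /PA /QB => /andP[/negbTE -> _].
  have Pi u : ~~ PA n f u u by rewrite /PA cycle_adj_irr //; lia.
  have Qi u : ~~ QB n f u u by rewrite /QB !cycle_adj_irr //; lia.
  case/orP: hab => h.
  - exact: (four _ _ _ PC QC PQ Pi Qi (balP _ _ hn) _ _ h).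
  - have bal' v : (exists y, QB n f v y) <-> (exists y, PA n f v y).
      by split => /(balP _ _ hn).
    have [a1 [a2 [a3 [a4 [U HH]]]]] := four _ _ _ QC PC QP Qi Pi bal' _ _ h.
    exists a1, a2, a3, a4; split => // v /HH [? ?]; by split.
have [a1 [a2 [a3 [a4 [U HH]]]]] := key.
have H2 v : v \in [:: a1; a2; a3; a4] -> 2 <= \sum_(y : 'I_n) delta_pair f v y.
  move=> /HH [[y hy] [z hz]].
  have zy : z != y.
    by apply/eqP => e; move: hz; rewrite e; move: hy; rewrite /PA /QB => /andP[-> _].
  rewrite (bigD1 y) // (bigD1 z) //= !dpE // hy hz orbT /=; lia.
have sym x y : delta_pair f x y = delta_pair f y x.
  by rewrite !dpE // /PA /QB (cycle_adjC _ y) (cycle_adjC _ (f y)).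
have zero x : delta_pair f x x = 0.
  by rewrite dpE // /PA /QB !cycle_adj_irr //; lia.
have D := dbl _ _ sym zero.
suff : 8 <= \sum_(x : 'I_n) \sum_(y : 'I_n) delta_pair f x y.
  by rewrite D /delta; lia.
rewrite (bigID (fun x => x \in [:: a1; a2; a3; a4]) xpredT) /=.
apply: leq_trans (leq_addr _ _).
rewrite -big_uniq //.
rewrite !big_cons big_nil.
have := H2 a1; have := H2 a2; have := H2 a3; have := H2 a4.
rewrite !inE !eqxx !orbT => h4 h3 h2 h1.
apply: (@leq_trans (2+(2+(2+(2+0))))) => //.
apply: leq_add; first exact: h1.
apply: leq_add; first exact: h2.
apply: leq_add; first exact: h3.
apply: leq_add; first exact: h4.
by [].
Qed.
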